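(* Let $r\in\mathbb Z_+$, $\mathfrak B$ a finite-dimensional Banach space, $\mathcal C$ the space of functions $[-r,0]\cap\mathbb Z\to\mathfrak B$ with norm $\|\varphi\|=\sum_{k=0}^r|\varphi(-k)|$, $A:\mathbb Z\to\mathfrak A$ and $f:\mathbb Z\to\mathfrak B$. Let $\psi(t,u,(A,f))$ be a solution of $u(t+1)=A(t)u_t+f(t)$ whose values $\{\psi(t,u,(A,f)):t\in\mathbb Z_+\}$ form a relatively compact set. Then the set $$H^+(u,(A,f)):=\overline{\{(\tilde\psi(\tau,u,(A,f)),(A_\tau,f_\tau)):\ \tau\ge0\}}\subseteq X:=\mathcal C\times H(A,f)$$ is conditionally compact with respect to $(X,h,Y)$, where $Y:=H(A,f)$ and $h:=pr_2:X\to Y$.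
   Context: $\mathfrak A$ is the Banach space of linear operators $\mathcal C\to\mathfrak B$ with operator norm; $C(\mathbb Z,\cdot)$ carries the topology of pointwise (compact-open) convergence. For a function $u$ and integer $t$, $u_t\in\mathcal C$ is $u_t(s)=u(t+s)$, $s\in[-r,0]$. $\psi(t,u,(A,f))$ denotes the solution defined for $t\ge-r$ with $\psi(s)=u(s)$ on $[-r,0]$, and $\tilde\psi(t,u,(A,f))\in\mathcal C$ is $\tilde\psi(t,u,(A,f))(s):=\psi(t+s,u,(A,f))$. $A_\tau(t)=A(t+\tau)$, $f_\tau(t)=f(t+\tau)$, and $H(A,f)$ is the closure of $\{(A_\tau,f_\tau):\tau\in\mathbb Z\}$ in $C(\mathbb Z,\mathfrak A)\times C(\mathbb Z,\mathfrak B)$. A subset $M\subseteq X$ is conditionally compact w.r.t. $(X,h,Y)$ if it is closed and $h^{-1}(Y')\cap M$ is relatively compact for every relatively compact $Y'\subseteq Y$. *)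

(* Defs.v *)
From HB Require Import structures.
From mathcomp Require Import all_boot all_order all_algebra.
From mathcomp Require Import all_classical all_reals all_analysis.
Set Implicit Arguments. Unset Strict Implicit. Unset Printing Implicit Defensive.
Import Order.TTheory GRing.Theory Num.Theory.
Import numFieldNormedType.Exports.
Local Open Scope classical_set_scope.
Local Open Scope ring_scope.

(* The finite-dimensional Banach space B is 'rV[R]_n.
   The phase space C = functions [-r,0] ∩ Z -> B is 'I_r.+1 -> 'rV[R]_n,
   where index k : 'I_r.+1 stands for the point -k (product topology,
   equal to the topology of the norm sum_k |phi(-k)|).
   A linear operator C -> B (element of the space 𝔄) is represented by its
   r.+1 block matrices: a : 'I_r.+1 -> 'M[R]_n acts by phi |-> sum_k phi k *m a k
   (the entrywise topology equals the operator-norm topology, finite dim). *)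
Notation Csp R n r := {ptws 'I_r.+1 -> 'rV[R]_n}.
Notation Aop R n r := {ptws 'I_r.+1 -> 'M[R]_n}.
(* C(Z,𝔄) and C(Z,B) with pointwise (= compact-open, Z discrete) topology *)
Notation AZ R n r := {ptws int -> Aop R n r}.
Notation BZ R n := {ptws int -> 'rV[R]_n}.

Definition opapp (R : realType) (n r : nat) (a : Aop R n r) (phi : Csp R n r)
  : 'rV[R]_n := \sum_(k < r.+1) (phi k *m a k).

Definition seg (R : realType) (n r : nat) (u : int -> 'rV[R]_n) (t : int)
  : Csp R n r := fun k => u (t - (nat_of_ord k)%:Z).

Definition shift (T : Type) (g : {ptws int -> T}) (tau : int) : {ptws int -> T} :=
  fun t => g (t + tau).

Definition hull (R : realType) (n r : nat) (A : AZ R n r)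
  (f : BZ R n) : set (AZ R n r * BZ R n) :=
  closure (range (fun tau : int => (shift A tau, shift f tau))).

Definition closure_in (T : topologicalType) (S E : set T) : set T :=
  closure E `&` S.

Definition rel_compact_in (T : topologicalType) (S E : set T) : Prop :=
  E `<=` S /\ compact (closure_in S E).

Definition cond_compact (T U : topologicalType) (X : set T) (Y : set U)
  (h : T -> U) (M : set T) : Prop :=
  [/\ M `<=` X, closure_in X M = M &
      forall Y' : set U, rel_compact_in Y Y' ->
        rel_compact_in X ((h @^-1` Y') `&` M)].

Definition is_solution (R : realType) (n r : nat) (A : AZ R n r)
  (f : BZ R n) (u : Csp R n r) (psi : int -> 'rV[R]_n) : Prop :=
  (forall k : 'I_r.+1, psi (- (nat_of_ord k)%:Z) = u k) /\
  (forall t : int, 0 <= t -> psi (t + 1) = opapp (A t) (@seg R n r psi t) + f t).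

Definition Xset (R : realType) (n r : nat) (A : AZ R n r)
  (f : BZ R n) :
  set (Csp R n r * (AZ R n r * BZ R n)) :=
  [set x | hull A f x.2].

Definition Hplus (R : realType) (n r : nat) (A : AZ R n r)
  (f : BZ R n) (psi : int -> 'rV[R]_n) :
  set (Csp R n r * (AZ R n r * BZ R n)) :=
  closure_in (Xset A f)
    [set (@seg R n r psi tau, (shift A tau, shift f tau)) | tau in [set tau : int | 0 <= tau]].

(* Main.v *)
Require Import Defs.
From HB Require Import structures.
From mathcomp Require Import all_boot all_order all_algebra.
From mathcomp Require Import all_classical all_reals all_analysis.
Import Order.TTheory GRing.Theory Num.Theory.
Import numFieldNormedType.Exports.
Local Open Scope classical_set_scope.
Local Open Scope ring_scope.

Lemma fstc (T U : topologicalType) : continuous (@fst T U).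
Proof. move=> x; exact: cvg_fst. Qed.
Lemma sndc (T U : topologicalType) : continuous (@snd T U).
Proof. move=> x; exact: cvg_snd. Qed.

Lemma rV_hausdorff (R : realType) n : hausdorff_space 'rV[R]_n.
Proof. exact: norm_hausdorff. Qed.

Lemma Csp_hausdorff (R : realType) n r : hausdorff_space (Csp R n r).
Proof. apply: hausdorff_product => _; exact: rV_hausdorff. Qed.

Lemma closure_min (T : topologicalType) (A B : set T) :
  closed B -> A `<=` B -> closure A `<=` B.
Proof. by move=> cB AB x; rewrite closureE => Hx; apply: Hx; split. Qed.

Theorem lemmal04p3 (R : realType) (n r : nat)
  (A : AZ R n r) (f : BZ R n) (u : Csp R n r)
  (psi : int -> 'rV[R]_n) :
  is_solution A f u psi ->
  compact (closure [set psi t | t in [set t : int | 0 <= t]]) ->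
  cond_compact (Xset A f) (hull A f) snd (Hplus A f psi).
Proof.
move=> [Hu _] Hc.
rewrite /Hplus; set S0 := (X in closure_in _ X).
have clX : closed (Xset A f).
  apply: preimage_closed; last exact: closed_closure.
  by move=> x _; apply: sndc.
have HM : closure_in (Xset A f) S0 = closure S0 `&` Xset A f by [].
split.
- by move=> x [].
- rewrite /closure_in; apply/seteqP; split.
    move=> x [Hx HX]; split => //.
    have cc : closure S0 = closure (closure S0).
      exact: ((closure_id (closure S0)).1 (@closed_closure _ S0)).
    have sub : closure S0 `&` Xset A f `<=` closure S0 by move=> y [].
    have := closureS sub Hx.
    by rewrite -cc.
  move=> x Hx; split => //; first exact: subset_closure.
  by case: Hx.
move=> Y' [HY'sub HY'c]; split.
  by move=> x [_ []].
set K := closure [set psi t | t in [set t : int | 0 <= t]] `|` range u.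
have Kc : compact K.
  apply: compactU => //; apply: finite_compact.
  exact: finite_image finite_finset.
set P := [set g : Csp R n r | forall i, K (g i)].
have Pc : compact P.
  exact: (@tychonoff _ (fun _ => 'rV[R]_n) (fun _ => K) (fun _ => Kc)).
have Pcl : closed P by apply: compact_closed => //; exact: Csp_hausdorff.
set Q := closure_in (hull A f) Y'.
have Qcl : closed Q by apply: closedI; [exact: closed_closure | exact: closed_closure].
set B := P `*` Q.
have Bc : compact B by exact: compact_setX.
have Bcl : closed B.
  have -> : B = (fst @^-1` P) `&` (snd @^-1` Q) by [].
  apply: closedI; apply: preimage_closed => //; move=> x _; [exact: fstc | exact: sndc].
have S0P : S0 `<=` fst @^-1` P.
  move=> x [tau Htau <-] i /=; rewrite /seg.
  case: tau Htau => [m|m] //= _.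
  case: (leqP (nat_of_ord i) m) => Him.
    left; apply: subset_closure; exists (m%:Z - (nat_of_ord i)%:Z) => //.
    by rewrite /= subr_ge0 lez_nat.
  right.
  have Hk : (i - m < r.+1)%N.
    by apply: leq_ltn_trans (leq_subr _ _) (ltn_ord i).
  exists (Ordinal Hk) => //.
  rewrite -Hu /=; congr psi.
  by rewrite -subzn ?opprB // ltnW.
have clS0P : closure S0 `<=` fst @^-1` P.
  apply: closure_min => //.
  by apply: preimage_closed => //; move=> x _; exact: fstc.
apply: (subclosed_compact _ Bc).
  by apply: closedI => //; exact: closed_closure.
move=> x [Hx _].
have : closure ((snd @^-1` Y') `&` closure_in (Xset A f) S0) `<=` B.
  apply: closure_min => //.
  move=> y [HyY [Hy HyX]]; split.
    exact: clS0P.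
  by split => //; apply: subset_closure.
by apply.
Qed.
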